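(* Let $S$ be an idempotent $\omega$-continuous semiring, $\mathcal X$ a finite set of variables, and $\vec f=(f_x)_{x\in\mathcal X}$ a vector of polynomials over $S$ in $\mathcal X$ in which every monomial contains at least one variable. Let $M^{(0)}=\widehat{\vec f}$ and $M^{(n+1)}=\mathrm{eval}_{M^{(n)}}(M^{(n)})$. Then for every $n\in\mathbb N$ and every $x\in\mathcal X$, $$M^{(n)}_x\;=\;\bigoplus_{t\in T_x^{\le 2^n}}\llbracket \mathrm{yield}(t)\rrbracket$$ as functions $S^{\mathcal X}\to S$.
   Context: Semiring notions: a semiring $(S,\oplus,\odot,0,1)$; natural order $a\le a\oplus b$; $\omega$-continuous: naturally ordered, chains have suprema, countable sums $\bigoplus_{i}a_i:=\sup_i(a_0\oplus\cdots\oplus a_i)$ commute with $\odot$ on both sides and are invariant under partitioning of the index set; idempotent: $a\oplus a=a$. Monomials are words $a_1x_{i_1}\cdots a_lx_{i_l}a_{l+1}$ ($a_j\in S$, $x_{i_j}\in\mathcal X$), polynomials finite sums of monomials; they are interpreted as functions $S^{\mathcal X}\to S$, and functions $S^{\mathcal X}\to S$ (and vectors of them) form a semiring under pointwise operations. For a vector $\vec v=(v_y)_{y\in\mathcal X}$ of functions and a function $g$, $\mathrm{eval}_{\vec v}(g)(\vec c)=g(v_{y}(\vec c))_{y\in\mathcal X}$ (composition), applied componentwise to vectors. Linear completion: a substitution $\{x\mapsto g\}$ applied to a polynomial $h$ yields the set $h\{x\mapsto g\}$ of polynomials obtained by replacing exactly one occurrence of $x$ in $h$ by $g$. Linear polynomial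 substitutions for $x$ are $\{x\mapsto x\}$ or $\{x\mapsto g\}$ with $g\in f_x\sigma_y$ for some variable $y$ and linear polynomial substitution $\sigma_y$ for $y$ (mutual induction). $\widehat{\vec f}$ is the vector with components $\widehat{f_x}=\bigoplus_{\sigma_x}x\sigma_x$, where $x\{x\mapsto g\}=g$ and the sum ranges over all linear polynomial substitutions for $x$. Derivation trees: associate with $\vec f$ the context-free grammar $G_{\vec f}$ with non-terminals $\mathcal X$, terminals the semiring elements, and a production $y\to w(m)$ for each monomial $m$ of $f_y$, where $w(m)$ is $m$ read as a word over $S\cup\mathcal X$. A derivation tree from $x$ (variables allowed at leaves) is a finite ordered tree whose root is labeled $x$, each inner node is labeled by a variable $y$ with children labeled, left to right, by the symbols of $w(m)$ for a production $y\to w(m)$, and each leaf is labeled by a semiring element or a variable. $\mathrm{yield}(t)$ is the word of leaf labels read left to right, and $\llbracket w\rrbracket$ is the monomial obtained by reading concatenation as $\odot$. $T_x^{\le k}$ is the set of derivation trees from $x$ of dimension at most $k$, where dimension is: $0$ for a leaf; $\dim$ of the child if exactly one child; otherwise, with $t_1,t_2$ children of highest and second-highest dimension, $\dim(t_1)+1$ if $\dim(t_1)=\dim(t_2)$ and $\dim(t_1)$ if $\dim(t_1)>\dim(t_2)$. *)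

(* Defs.v *)
From HB Require Import structures.
From mathcomp Require Import all_boot all_order all_algebra.
From Stdlib Require Import ClassicalEpsilon.
Set Implicit Arguments. Unset Strict Implicit. Unset Printing Implicit Defensive.
Import GRing.Theory.
Local Open Scope ring_scope.

Section Semiring.
Variable S : pzSemiRingType.

Definition nle (a b : S) : Prop := exists c, a + c = b.

Definition is_sup (u : nat -> S) (s : S) : Prop :=
  (forall n, nle (u n) s) /\ (forall b, (forall n, nle (u n) b) -> nle s b).

Definition psum (a : nat -> S) (n : nat) : S := \sum_(i < n) a i.

Definition csum (a : nat -> S) : S :=
  epsilon (inhabits 0) (is_sup (psum a)).

Definition csumT (I : countType) (F : I -> S) : S :=
  csum (fun n => if @unpickle I n is Some i then F i else 0).

Definition idempotent_sr : Prop := forall a : S, a + a = a.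

Record omega_continuous : Prop := {
  (* naturally ordered: the natural order is a partial order
     (reflexivity/transitivity hold in every semiring) *)
  nle_antisym : forall a b, nle a b -> nle b a -> a = b;
  chain_sup : forall u : nat -> S, (forall n, nle (u n) (u n.+1)) ->
                exists s, is_sup u s;
  csum_mull : forall c (a : nat -> S), c * csum a = csum (fun i => c * a i);
  csum_mulr : forall c (a : nat -> S), csum a * c = csum (fun i => a i * c);
  (* invariance under partitioning the index set into blocks
     {i | blk i = j}, j in nat (a block is summed in increasing order) *)
  csum_partition : forall (a : nat -> S) (blk : nat -> nat),
     csum (fun j => csum (fun i => if blk i == j then a i else 0)) = csum a
}.

End Semiring.

Section Polys.
Variables (S : pzSemiRingType) (X : finType).

(* monomial a_1 x_(i_1) a_2 ... a_l x_(i_l) a_(l+1), stored as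
   ([:: (a_1, x_(i_1)); ...; (a_l, x_(i_l))], a_(l+1)) *)
Definition smono := (seq (S * X) * S)%type.
Definition spoly := seq smono.

Definition meval (m : smono) (c : X -> S) : S :=
  foldr (fun p r => p.1 * c p.2 * r) m.2 m.1.
Definition peval (h : spoly) (c : X -> S) : S := \sum_(m <- h) meval m c.

(* concatenation of words (adjacent constants are multiplied) *)
Definition mcat (m1 m2 : smono) : smono :=
  match m2.1 with
  | [::] => (m1.1, m1.2 * m2.2)
  | (d, y) :: l2 => (m1.1 ++ (m1.2 * d, y) :: l2, m2.2)
  end.

Definition var_poly (x : X) : spoly := [:: ([:: (1, x)], 1)].

(* occurrence number k in the j-th monomial of h: returns the variable y
   at that occurrence and the map g |-> h with that occurrence replaced by g *)
Definition occ_at (h : spoly) (j k : nat) : option (X * (spoly -> spoly)) :=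
  match drop j h with
  | m :: hr =>
      match drop k m.1 with
      | (a, y) :: rest =>
          Some (y, fun g => take j h ++
                  [seq mcat (mcat (take k m.1, a) n) (rest, m.2) | n <- g] ++ hr)
      | [::] => None
      end
  | [::] => None
  end.

Variable f : X -> spoly.

(* Linear polynomial substitutions {x |-> g} for x, encoded by the sequence
   of occurrence choices used in their (mutually inductive) construction:
   [::] codes {x |-> x};  (j,k) :: cs codes {x |-> g} with g in f_x sigma_y,
   where y is the variable at occurrence k of monomial j of f_x and
   sigma_y is coded by cs.  Returns the polynomial x sigma_x = g. *)
Fixpoint linsub (x : X) (cs : seq (nat * nat)) : option spoly :=
  match cs with
  | [::] => Some (var_poly x)
  | (j, k) :: cs' =>
      match occ_at (f x) j k with
      | Some (y, rep) => omap rep (linsub y cs')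
      | None => None
      end
  end.

Definition hatf (x : X) (c : X -> S) : S :=
  csumT (fun cs : seq (nat * nat) =>
           if linsub x cs is Some g then peval g c else 0).

Fixpoint Miter (n : nat) : X -> (X -> S) -> S :=
  match n with
  | 0 => hatf
  | n'.+1 => fun x c => Miter n' x (fun y => Miter n' y c)
  end.

End Polys.

(* Derivation trees of G_f.  The label of the root (a variable) is given
   externally.  DLeaf: the node is a leaf (labelled by its variable).
   DNode j ts: inner node labelled y using the production y -> w(m) for the
   j-th monomial m of f_y; its children are, left to right,
   a_1, t_1, a_2, ..., t_l, a_(l+1), where the a_i are semiring-element leaves
   and ts = [:: t_1; ...; t_l] are the subtrees for the variables of m. *)
Inductive dtree := DLeaf | DNode of nat & seq dtree.

Fixpoint dtree_enc (t : dtree) : GenTree.tree nat :=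
  match t with
  | DLeaf => GenTree.Node 0 [::]
  | DNode j ts => GenTree.Node j.+1
      ((fix go ts := match ts with [::] => [::] | t :: ts' => dtree_enc t :: go ts' end) ts)
  end.

Fixpoint dtree_dec (g : GenTree.tree nat) : option dtree :=
  match g with
  | GenTree.Leaf _ => None
  | GenTree.Node 0 _ => Some DLeaf
  | GenTree.Node j.+1 gs => Some (DNode j
      ((fix go gs := match gs with
                     | [::] => [::]
                     | g :: gs' => if dtree_dec g is Some t then t :: go gs' else go gs'
                     end) gs))
  end.

Lemma dtree_encK : pcancel dtree_enc dtree_dec.
Proof.
rewrite /pcancel; fix IH 1. case=> [|j ts] //=. congr (Some (DNode j _)).
elim: ts => [|t ts IHts] //=. by rewrite IH IHts.
Qed.

HB.instance Definition _ := Countable.copy dtree (pcan_type dtree_encK).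

Definition dim_children (ds : seq nat) : nat :=
  match ds with
  | [::] => 0
  | [:: d] => d
  | _ => let s := sort geq ds in
         let d1 := nth 0 s 0 in let d2 := nth 0 s 1 in
         if d1 == d2 then d1.+1 else d1
  end.

Fixpoint dtree_dim (t : dtree) : nat :=
  match t with
  | DLeaf => 0
  | DNode j ts => dim_children
      (0 :: (fix go ts := match ts with
                          | [::] => [::]
                          | t :: ts' => dtree_dim t :: 0 :: go ts'
                          end) ts)
  end.

Section Trees.
Variables (S : pzSemiRingType) (X : finType) (f : X -> spoly S X).

Definition mono0 : smono S X := ([::], 0).

Fixpoint dwf (y : X) (t : dtree) : bool :=
  match t with
  | DLeaf => true
  | DNode j ts => (j < size (f y))%N &&
      (fix go (P : seq (S * X)) ts {struct ts} := match P, ts with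
        | (a, z) :: P', t' :: ts' => dwf z t' && go P' ts'
        | [::], [::] => true
        | _, _ => false
        end) (nth mono0 (f y) j).1 ts
  end.

Fixpoint dyield (c : X -> S) (y : X) (t : dtree) : S :=
  match t with
  | DLeaf => c y
  | DNode j ts =>
      let m := nth mono0 (f y) j in
      (fix go (P : seq (S * X)) ts {struct ts} := match P, ts with
        | (a, z) :: P', t' :: ts' => a * dyield c z t' * go P' ts'
        | _, _ => m.2
        end) m.1 ts
  end.

Definition treesum (k : nat) (x : X) (c : X -> S) : S :=
  csumT (fun t : dtree => if dwf x t && (dtree_dim t <= k)%N then dyield c x t else 0).

End Trees.

(* Main.v *)
Require Import Defs.
From mathcomp Require Import all_boot all_order all_algebra zify.
From Stdlib Require Import ClassicalEpsilon.
Set Implicit Arguments. Unset Strict Implicit. Unset Printing Implicit Defensive.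

Lemma dim_childrenP (ds : seq nat) (m : nat) :
  (dim_children ds <= m) = (all (fun d => d <= m) ds && (count (fun d => m <= d) ds <= 1)).
Proof.
case: ds => [|d0 [|d1 ds]]; first by [].
  by rewrite /= addn0 andbT leq_b1 andbT.
rewrite /dim_children.
set l := [:: d0, d1 & ds].
set s := sort geq l.
have Hs : sorted geq s by apply: sort_sorted => a b; exact: leq_total.
have Hp : perm_eq s l by rewrite /s perm_sort.
rewrite -(perm_all _ Hp) -((permP Hp) (fun d => m <= d)).
have : (2 <= size s)%N by rewrite size_sort.
case: s Hs {Hp} => [|e1 [|e2 s]] //= Hs _.
case/andP: Hs => H12 Hs.
have Hall : all (fun d => d <= e2) s.
  have := order_path_min (fun y x z (h1 : x >= y) (h2 : y >= z) => leq_trans h2 h1) Hs.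
  by apply: sub_all => x /=.
have Hc : (e2 < m -> count (fun d => m <= d) s = 0).
  move=> lt; apply/eqP; rewrite -leqn0 leqNgt -has_count; apply/hasP => -[x xs].
  by move: (allP Hall x xs) => h1 h2; move: (leq_trans h2 h1); rewrite leqNgt lt.
have Ha : (e2 < m -> all (fun d => d <= m) s).
  move=> lt; apply: sub_all Hall => x h; exact: (leq_trans h (ltnW lt)).
case: eqP => [E|NE].
- rewrite -E in Ha Hc *. case: (leqP e1.+1 m) => h /=.
  + by rewrite (leq_trans (leqnSn _) h) (Ha h) (Hc h) addn0 (leqNgt m e1) h.
  + case: (leqP e1 m) => h2 //=. have -> : m = e1 by apply/eqP; rewrite eqn_leq h2 -ltnS h.
    by rewrite leqnn /= !add1n ltnS ltn0 andbF.
- have lt21 : e2 < e1 by rewrite ltn_neqAle H12 andbT; apply/eqP => h; apply: NE; rewrite h.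
  case: (leqP e1 m) => h /=.
  + rewrite (leq_trans H12 h) (Ha (leq_trans lt21 h)) (Hc (leq_trans lt21 h)) addn0.
    by rewrite (leqNgt m e2) (leq_trans lt21 h) /= addn0 leq_b1.
  + by [].
Qed.

Lemma count_all2 (A B : Type) (R : A -> B -> bool) (P : pred A) (Q : pred B) l1 l2 :
  all2 R l1 l2 -> (forall a b, R a b -> P a -> Q b) -> (count P l1 <= count Q l2)%N.
Proof.
move=> H HR; elim: l1 l2 H => [|a l1 IH] [|b l2] //= /andP [hab h].
apply: leq_add; last exact: IH.
by case: (P a) (HR a b hab) => // ->.
Qed.

Lemma all_all2 (A B : Type) (R : A -> B -> bool) (P : pred A) (Q : pred B) l1 l2 :
  all2 R l1 l2 -> (forall a b, R a b -> Q b -> P a) -> all Q l2 -> all P l1.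
Proof.
move=> H HR; elim: l1 l2 H => [|a l1 IH] [|b l2] //= /andP [hab h] /andP [hb hl].
by rewrite (HR _ _ hab hb) (IH _ h hl).
Qed.

Lemma D_ub ds d : d \in ds -> (d <= dim_children ds)%N.
Proof.
move=> h; have := leqnn (dim_children ds); rewrite dim_childrenP => /andP [/allP H _].
exact: H.
Qed.

Lemma D_shift (K : nat) l1 l2 :
  all2 (fun a b => a <= b + K)%N l1 l2 -> (dim_children l1 <= dim_children l2 + K)%N.
Proof.
move=> H; have := leqnn (dim_children l2); rewrite !dim_childrenP => /andP [Ha Hc].
apply/andP; split.
  apply: all_all2 H _ Ha => a b h1 h2 /=; move: h1 h2; lia.
apply: leq_trans _ Hc; apply: count_all2 H _ => a b h1 h2.
move: h1 h2; lia.
Qed.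

Lemma D_trunc (K : nat) l1 l2 :
  all2 (fun a b => a <= b - K)%N l1 l2 -> (K < dim_children l2)%N ->
  (dim_children l1 <= dim_children l2 - K)%N.
Proof.
move=> H HK; have := leqnn (dim_children l2); rewrite !dim_childrenP => /andP [Ha Hc].
apply/andP; split.
  apply: all_all2 H _ Ha => a b h1 h2 /=; move: h1 h2; lia.
apply: leq_trans _ Hc; apply: count_all2 H _ => a b h1 h2.
have h3 := leq_trans h2 h1; move: HK h3; lia.
Qed.

Lemma D_ge1 l : (2 <= size l)%N -> (1 <= dim_children l)%N.
Proof.
move=> h; rewrite lt0n; apply/negP => /eqP E.
have := leqnn (dim_children l); rewrite {2}E dim_childrenP => /andP [_].
by rewrite (eq_count (a2 := predT)) // count_predT leqNgt h.
Qed.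
Fixpoint dims (ts : seq dtree) : seq nat :=
  match ts with [::] => [::] | t :: ts' => dtree_dim t :: 0 :: dims ts' end.

Lemma dimE j ts : dtree_dim (DNode j ts) = dim_children (0 :: dims ts).
Proof. by []. Qed.

Import GRing.Theory.
Local Open Scope ring_scope.
Section T.
Variables (S : pzSemiRingType) (X : finType) (f : X -> spoly S X).

Fixpoint wfl (P : seq (S * X)) (ts : seq dtree) {struct ts} : bool :=
  match P, ts with
  | (a, z) :: P', t' :: ts' => dwf f z t' && wfl P' ts'
  | [::], [::] => true
  | _, _ => false
  end.

Lemma dwfE y j ts : dwf f y (DNode j ts) = (j < size (f y))%N && wfl (nth (mono0 S X) (f y) j).1 ts.
Proof. by []. Qed.

Definition Gy (c : X -> S) (b : S) :=
  fix go (P : seq (S * X)) (ts : seq dtree) {struct ts} : S :=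
  match P, ts with
  | (a, z) :: P', t' :: ts' => a * dyield f c z t' * go P' ts'
  | _, _ => b
  end.

Lemma dyieldE c y j ts : dyield f c y (DNode j ts) =
  Gy c (nth (mono0 S X) (f y) j).2 (nth (mono0 S X) (f y) j).1 ts.
Proof. by []. Qed.
End T.
Section Sums.
Variable S : pzSemiRingType.
Hypothesis idem : idempotent_sr S.
Hypothesis oc : omega_continuous S.

Local Notation "a <=' b" := (nle a b) (at level 70).

Lemma nle_refl (a : S) : a <=' a.
Proof. by exists 0; rewrite addr0. Qed.

Lemma nle_trans (a b d : S) : a <=' b -> b <=' d -> a <=' d.
Proof. by move=> [u <-] [v <-]; exists (u + v); rewrite addrA. Qed.

Lemma nle_addr (a b : S) : a <=' a + b.
Proof. by exists b. Qed.

Lemma nle_addl (a b : S) : a <=' b + a.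
Proof. by exists b; rewrite addrC. Qed.

Lemma nle0 (a : S) : 0 <=' a.
Proof. by exists a; rewrite add0r. Qed.

Lemma nle_lub2 (a b z : S) : a <=' z -> b <=' z -> a + b <=' z.
Proof.
move=> [u Hu] [v Hv]; exists (u + v).
by rewrite addrACA -[in RHS](idem z) -{1}Hu -Hv addrCA addrA.
Qed.

Lemma nle_mull (c a b : S) : a <=' b -> c * a <=' c * b.
Proof. by move=> [u <-]; exists (c * u); rewrite mulrDr. Qed.

Lemma nle_mulr (c a b : S) : a <=' b -> a * c <=' b * c.
Proof. by move=> [u <-]; exists (u * c); rewrite mulrDl. Qed.

Lemma nle_mul2 (a a' b b' : S) : a <=' a' -> b <=' b' -> a * b <=' a' * b'.
Proof. move=> h1 h2; apply: nle_trans (nle_mulr _ h1) (nle_mull _ h2). Qed.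

Lemma nle_anti (a b : S) : a <=' b -> b <=' a -> a = b.
Proof. move=> h1 h2; exact: (@nle_antisym S oc a b h1 h2). Qed.

Lemma csum_sup (a : nat -> S) : is_sup (psum a) (csum a).
Proof.
rewrite /csum; apply: epsilon_spec; apply: (chain_sup oc) => n.
by rewrite /psum big_ord_recr /=; apply: nle_addr.
Qed.

Lemma psum_ub (a : nat -> S) i : a i <=' psum a i.+1.
Proof. by rewrite /psum big_ord_recr /=; apply: nle_addl. Qed.

Lemma csum_ub (a : nat -> S) i : a i <=' csum a.
Proof. apply: nle_trans (psum_ub a i) _; exact: (csum_sup a).1. Qed.

Lemma csum_lub (a : nat -> S) z : (forall i, a i <=' z) -> csum a <=' z.
Proof.
move=> H; apply: (csum_sup a).2 => n; elim: n => [|n IH].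
  by rewrite /psum big_ord0; apply: nle0.
by rewrite /psum big_ord_recr /=; apply: nle_lub2.
Qed.

Lemma csumT_ub (I : countType) (F : I -> S) i : F i <=' csumT F.
Proof.
have := csum_ub (fun n => if @unpickle I n is Some i then F i else 0) (pickle i).
by rewrite pickleK.
Qed.

Lemma csumT_lub (I : countType) (F : I -> S) z : (forall i, F i <=' z) -> csumT F <=' z.
Proof.
move=> H; apply: csum_lub => n; case: unpickle => [i|]; [exact: H | exact: nle0].
Qed.

Lemma csumT_mul_lub (I : countType) (F : I -> S) p r z :
  (forall i, p * F i * r <=' z) -> p * csumT F * r <=' z.
Proof.
move=> H; rewrite /csumT (csum_mull oc) (csum_mulr oc); apply: csum_lub => n.
case: unpickle => [i|]; [exact: H | rewrite mulr0 mul0r; exact: nle0].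
Qed.

Lemma bigsum_lub (T : eqType) (F : T -> S) (g : seq T) z :
  (forall m, m \in g -> F m <=' z) -> \sum_(m <- g) F m <=' z.
Proof.
elim: g => [|m g IH] H; first by rewrite big_nil; apply: nle0.
rewrite big_cons; apply: nle_lub2; first by apply: H; rewrite mem_head.
by apply: IH => m' h; apply: H; rewrite in_cons h orbT.
Qed.

Lemma bigsum_ub (T : eqType) (F : T -> S) (g : seq T) m :
  m \in g -> F m <=' \sum_(m <- g) F m.
Proof.
elim: g => [|m0 g IH] //; rewrite in_cons big_cons => /orP [/eqP ->|h].
  exact: nle_addr.
exact: nle_trans (IH h) (nle_addl _ _).
Qed.
End Sums.


Lemma dtree_ind2 (P : dtree -> Prop) : P DLeaf ->
  (forall j ts, (forall t, t \in ts -> P t) -> P (DNode j ts)) -> forall t, P t.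
Proof.
move=> H0 H1; fix IH 1; case=> [|j ts]; first exact: H0.
apply: H1; move: ts; fix IHts 1; case=> [|t0 ts] t.
  rewrite in_nil => F; exfalso; exact: (Bool.diff_false_true F).
rewrite in_cons => /orP [/eqP -> | h]; first exact: (IH t0).
exact: (IHts ts t h).
Qed.

Lemma all2_dims (R : nat -> nat -> bool) ts1 ts2 :
  R 0%N 0%N -> all2 (fun t1 t2 => R (dtree_dim t1) (dtree_dim t2)) ts1 ts2 ->
  all2 R (dims ts1) (dims ts2).
Proof.
move=> R0; elim: ts1 ts2 => [|t1 ts1 IH] [|t2 ts2] //= /andP [h1 h2].
by rewrite h1 R0 IH.
Qed.

Section Comp.
Variables (S : pzSemiRingType) (X : finType) (f : X -> spoly S X).
Hypothesis idem : idempotent_sr S.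
Hypothesis oc : omega_continuous S.
Local Notation "a <=' b" := (nle a b) (at level 70).

Lemma term_le (c : X -> S) k y t : dwf f y t -> (dtree_dim t <= k)%N ->
  dyield f c y t <=' treesum f k y c.
Proof.
move=> h1 h2; rewrite /treesum.
have := csumT_ub oc (fun t : dtree => if dwf f y t && (dtree_dim t <= k)%N then dyield f c y t else 0) t.
by rewrite h1 h2.
Qed.

Lemma TS_mono (c : X -> S) k k' y : (k <= k')%N -> treesum f k y c <=' treesum f k' y c.
Proof.
move=> hk; apply: (csumT_lub idem oc) => t; case: ifP => [/andP [h1 h2]|_]; last exact: nle0.
by apply: term_le => //; apply: leq_trans hk.
Qed.

Variables (K : nat) (c c' : X -> S).
Hypothesis Hc' : forall y, c' y = treesum f K y c.

Lemma compA_list b (P : seq (S * X)) ts p z :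
  wfl f P ts ->
  (forall t, t \in ts -> forall y k, dwf f y t -> (dtree_dim t + K <= k)%N ->
       dyield f c' y t <=' treesum f k y c) ->
  (forall ts'', wfl f P ts'' ->
      all2 (fun t'' t => dtree_dim t'' <= dtree_dim t + K)%N ts'' ts ->
      p * Gy f c b P ts'' <=' z) ->
  p * Gy f c' b P ts <=' z.
Proof.
elim: P ts p => [|[a z0] P IH] [|t ts] p //= Hw IHt H.
  by apply: (H [::]).
case/andP: Hw => hwt hwl.
rewrite mulrA mulrA.
apply: nle_trans (nle_mulr _ (nle_mull _ (IHt t (mem_head _ _) z0 (dtree_dim t + K)%N hwt (leqnn _)))) _.
rewrite /treesum; apply: (csumT_mul_lub idem oc) => t''.
case: ifP => [/andP [h1 h2]|_]; last by rewrite mulr0 mul0r; apply: nle0.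
apply: IH => //.
  by move=> t1 h1'; apply: IHt; rewrite in_cons h1' orbT.
move=> ts3 hw3 ha3; have := H (t'' :: ts3); rewrite /= h1 hw3 h2 ha3 !mulrA.
by apply.
Qed.

Lemma compA t : forall y k, dwf f y t -> (dtree_dim t + K <= k)%N ->
  dyield f c' y t <=' treesum f k y c.
Proof.
elim/dtree_ind2: t => [|j ts IHts] y k.
  by move=> _ hk /=; rewrite Hc'; apply: TS_mono.
rewrite dwfE => /andP [hj hw] hk.
rewrite dyieldE -[X in X <=' _]mul1r; apply: compA_list => // ts'' hw'' ha''.
rewrite mul1r -dyieldE; apply: term_le; first by rewrite dwfE hj hw''.
apply: leq_trans hk; rewrite !dimE; apply: D_shift.
by apply: all2_dims.
Qed.

Lemma compC_list b (P : seq (S * X)) ts :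
  wfl f P ts ->
  (forall t, t \in ts -> forall y, dwf f y t -> exists t0, [/\ dwf f y t0,
       (dtree_dim t0 <= dtree_dim t - K)%N & dyield f c y t <=' dyield f c' y t0]) ->
  exists ts0, [/\ wfl f P ts0,
      all2 (fun t0 t => dtree_dim t0 <= dtree_dim t - K)%N ts0 ts &
      Gy f c b P ts <=' Gy f c' b P ts0].
Proof.
elim: P ts => [|[a z0] P IH] [|t ts] //= Hw IHt.
  by exists [::]; split => //; apply: nle_refl.
case/andP: Hw => hwt hwl.
have [t0 [h1 h2 h3]] := IHt t (mem_head _ _) z0 hwt.
have [ts0 [h4 h5 h6]] := IH ts hwl (fun t1 h => IHt t1 (mem_behead (s := t :: ts) h)).
exists (t0 :: ts0); split => /=; first by rewrite h1 h4.
  by rewrite h2 h5.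
by apply: nle_mul2 => //; apply: nle_mull.
Qed.

Lemma compC t : forall y, dwf f y t -> exists t0, [/\ dwf f y t0,
       (dtree_dim t0 <= dtree_dim t - K)%N & dyield f c y t <=' dyield f c' y t0].
Proof.
elim/dtree_ind2: t => [|j ts IHts] y hw.
  exists DLeaf; split => //=; rewrite Hc'; exact: (term_le c hw (leq0n K)).
case: (leqP (dtree_dim (DNode j ts)) K) => hK.
  exists DLeaf; split => //; rewrite [dyield _ _ _ DLeaf]/= Hc'; exact: term_le.
move: hw; rewrite dwfE => /andP [hj hw].
have [ts0 [h1 h2 h3]] := compC_list (nth (mono0 S X) (f y) j).2 hw IHts.
exists (DNode j ts0); split; first by rewrite dwfE hj h1.
  move: hK; rewrite !dimE => hK; apply: D_trunc => //.
  by apply: all2_dims.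
by rewrite !dyieldE.
Qed.

Lemma comp_treesum x : treesum f K x c' = treesum f (K + K) x c.
Proof.
apply: (nle_anti oc).
  apply: (csumT_lub idem oc) => t; case: ifP => [/andP [h1 h2]|_]; last exact: nle0.
  by apply: compA => //; rewrite leq_add2r.
apply: (csumT_lub idem oc) => t; case: ifP => [/andP [h1 h2]|_]; last exact: nle0.
have [t0 [h3 h4 h5]] := compC h1.
apply: (nle_trans h5); apply: term_le => //.
by apply: leq_trans h4 _; rewrite leq_subLR.
Qed.
End Comp.


Lemma dims_cat ts1 ts2 : dims (ts1 ++ ts2) = dims ts1 ++ dims ts2.
Proof. by elim: ts1 => //= t ts ->. Qed.

Lemma dims_nseq k : dims (nseq k DLeaf) = nseq (k + k) 0%N.
Proof. by elim: k => //= k ->; rewrite addnS. Qed.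

Section Base.
Variables (S : pzSemiRingType) (X : finType) (f : X -> spoly S X).
Hypothesis idem : idempotent_sr S.
Hypothesis oc : omega_continuous S.
Local Notation "a <=' b" := (nle a b) (at level 70).
Variable c : X -> S.

Definition mv (P : seq (S * X)) := foldr (fun p r => p.1 * c p.2 * r) 1 P.

Lemma mevalE P b : meval (P, b) c = mv P * b.
Proof.
rewrite /meval /=; elim: P => [|p P IH] /=; first by rewrite mul1r.
by rewrite IH !mulrA.
Qed.

Lemma meval_mcat m1 m2 : meval (mcat m1 m2) c = meval m1 c * meval m2 c.
Proof.
case: m1 m2 => [P1 b1] [[|[d y] P2] b2]; rewrite /mcat /=.
  by rewrite !mevalE /= mul1r mulrA.
rewrite !mevalE /mv foldr_cat -/(mv _).
have -> : forall z P, foldr (fun p r => p.1 * c p.2 * r) z P = mv P * z.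
  move=> z; elim=> [|p P IH] /=; first by rewrite mul1r.
  by rewrite IH !mulrA.
by rewrite /= -/(mv P2) !mulrA.
Qed.

Lemma Gy_cat b P1 P2 ts2 :
  Gy f c b (P1 ++ P2) (nseq (size P1) DLeaf ++ ts2) = mv P1 * Gy f c b P2 ts2.
Proof.
elim: P1 => [|[a z] P1 IH] /=; first by rewrite mul1r.
by rewrite IH !mulrA.
Qed.

Lemma Gy_leaves b P : Gy f c b P (nseq (size P) DLeaf) = mv P * b.
Proof. by have := Gy_cat b P [::] [::]; rewrite !cats0 /= => ->. Qed.

Lemma wfl_cat P1 P2 ts1 ts2 : size P1 = size ts1 ->
  wfl f (P1 ++ P2) (ts1 ++ ts2) = wfl f P1 ts1 && wfl f P2 ts2.
Proof.
elim: P1 ts1 => [|[a z] P1 IH] [|t ts1] //= [hs].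
by rewrite IH // andbA.
Qed.

Lemma wfl_leaves P : wfl f P (nseq (size P) DLeaf).
Proof. by elim: P => [|[a z] P IH]. Qed.

Lemma wfl_size P ts : wfl f P ts -> size P = size ts.
Proof. by elim: P ts => [|[a z] P IH] [|t ts] //= /andP [_ /IH ->]. Qed.

Lemma spine_facts y j k a z rest :
  drop k (nth (mono0 S X) (f y) j).1 = (a, z) :: rest ->
  (nth (mono0 S X) (f y) j).1 = take k (nth (mono0 S X) (f y) j).1 ++ (a, z) :: rest /\
  size (take k (nth (mono0 S X) (f y) j).1) = k.
Proof.
move=> E; split; first by rewrite -E cat_take_drop.
apply: size_takel; case: leqP => // h.
by move: E; rewrite drop_oversize // ltnW.
Qed.

Lemma spine_yield y j k a z rest t' n' :
  drop k (nth (mono0 S X) (f y) j).1 = (a, z) :: rest ->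
  meval n' c = dyield f c z t' ->
  meval (mcat (mcat (take k (nth (mono0 S X) (f y) j).1, a) n')
              (rest, (nth (mono0 S X) (f y) j).2)) c =
  dyield f c y (DNode j (nseq k DLeaf ++ t' :: nseq (size rest) DLeaf)).
Proof.
move=> E Hn; have [E1 E2] := spine_facts E.
rewrite dyieldE {2}E1 -[X in nseq X _]E2 Gy_cat /= Gy_leaves.
by rewrite !meval_mcat !mevalE Hn !mulrA.
Qed.

Lemma spine_wf y j k a z rest t' :
  (j < size (f y))%N ->
  drop k (nth (mono0 S X) (f y) j).1 = (a, z) :: rest ->
  dwf f z t' ->
  dwf f y (DNode j (nseq k DLeaf ++ t' :: nseq (size rest) DLeaf)).
Proof.
move=> hj E ht; have [E1 E2] := spine_facts E.
rewrite dwfE hj /= E1 wfl_cat; last by rewrite size_nseq.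
by rewrite -[X in nseq X _]E2 wfl_leaves /= ht wfl_leaves.
Qed.

Lemma spine_dim j k t' r : (dtree_dim t' <= 1)%N ->
  (dtree_dim (DNode j (nseq k DLeaf ++ t' :: nseq r DLeaf)) <= 1)%N.
Proof.
move=> h; rewrite dimE dim_childrenP dims_cat /= !dims_nseq /= all_cat count_cat /=.
rewrite !all_nseq !count_nseq /= h !orbT /= !mul0n addn0 add0n.
by case: (1 <= dtree_dim t')%N.
Qed.

Lemma leafnode_dim j r : (dtree_dim (DNode j (nseq r DLeaf)) <= 1)%N.
Proof.
rewrite dimE dim_childrenP /= !dims_nseq /= all_nseq count_nseq /= orbT /=.
by rewrite mul0n.
Qed.

Lemma base_dir1 cs : forall y g, linsub f y cs = Some g -> forall n, n \in g ->
  exists t, [/\ dwf f y t, (dtree_dim t <= 1)%N & meval n c = dyield f c y t].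
Proof.
have leafnode : forall y n, n \in f y ->
    exists t, [/\ dwf f y t, (dtree_dim t <= 1)%N & meval n c = dyield f c y t].
  move=> y n hn; exists (DNode (index n (f y)) (nseq (size n.1) DLeaf)).
  rewrite dwfE index_mem hn nth_index // wfl_leaves; split => //.
    exact: leafnode_dim.
  by rewrite dyieldE nth_index // Gy_leaves -mevalE; case: n {hn}.
elim: cs => [|[j k] cs IH] y g /=.
  move=> [<-] n; rewrite mem_seq1 => /eqP ->; exists DLeaf; split => //.
  by rewrite /meval /= mulr1 mul1r.
case E: (occ_at (f y) j k) => [[z rep]|] //.
case E2: (linsub f z cs) => [g'|] //= [<-] n.
move: E; rewrite /occ_at; case Ed: (drop j (f y)) => [|m hr] //.
case Ek: (drop k m.1) => [|[a z'] rest] // [Hz Hrep]; subst z rep.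
have hm : m = nth (mono0 S X) (f y) j.
  by have := congr1 (fun s => nth (mono0 S X) s 0) Ed; rewrite nth_drop addn0 /=.
have hj : (j < size (f y))%N.
  by case: leqP => // h; move: Ed; rewrite drop_oversize.
rewrite !mem_cat => /or3P [h|/mapP [n' hn' ->]|h].
- by apply: leafnode; apply: mem_take h.
- have [t' [h1 h2 h3]] := IH z' g' E2 n' hn'.
  rewrite hm in Ek; exists (DNode j (nseq k DLeaf ++ t' :: nseq (size rest) DLeaf)).
  split; [exact: (spine_wf hj Ek h1) | exact: spine_dim | rewrite hm; exact: (spine_yield Ek h3)].
- by apply: leafnode; apply: (mem_drop (n0 := j)); rewrite Ed in_cons h orbT.
Qed.

Lemma size_dims ts : size (dims ts) = (size ts + size ts)%N.
Proof. by elim: ts => //= t ts ->; rewrite addnS. Qed.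

Hypothesis Hf : forall x, all (fun m : smono S X => (0 < size m.1)%N) (f x).

Lemma nonleaf_dim t y : dwf f y t -> t != DLeaf -> (1 <= dtree_dim t)%N.
Proof.
case: t => [|j ts] // hw _; move: hw; rewrite dwfE => /andP [hj hw].
have hs := wfl_size hw.
have hp := allP (Hf y) _ (mem_nth (mono0 S X) hj).
rewrite dimE; apply: D_ge1; rewrite /= size_dims -hs.
by rewrite ltnS (leq_trans hp) // leq_addr.
Qed.

Lemma count_nonleaf P ts : wfl f P ts ->
  (count (fun t => t != DLeaf) ts <= count (fun d => 1 <= d)%N (0%N :: dims ts))%N.
Proof.
elim: P ts => [|[a z] P IH] [|t ts] //= /andP [ht hw].
have := IH _ hw; rewrite /= => h.
rewrite !add0n; apply: leq_add => //.
by case: eqP => //= /eqP hn; rewrite (nonleaf_dim ht hn).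
Qed.

Lemma split_one ts : ts != [::] -> (count (fun t => t != DLeaf) ts <= 1)%N ->
  exists k t' r, ts = nseq k DLeaf ++ t' :: nseq r DLeaf.
Proof.
elim: ts => [|t0 ts IH] // _ /=.
case: eqP => [-> | hn] /=.
  case: ts IH => [|t1 ts] IH.
    by move=> _; exists 0%N, DLeaf, 0%N.
  rewrite add0n => h; have [k [t' [r E]]] := IH isT h.
  by exists k.+1, t', r; rewrite E.
rewrite add1n ltnS leqn0 => /eqP h.
exists 0%N, t0, (size ts); congr (_ :: _); apply/all_pred1P.
apply/allP => t ht; apply/negPn/negP => hne.
have : (0 < count (fun t => t != DLeaf) ts)%N by rewrite -has_count; apply/hasP; exists t.
by rewrite h.
Qed.

Lemma base_dir2 t : forall y, dwf f y t -> (dtree_dim t <= 1)%N ->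
  exists cs g n, [/\ linsub f y cs = Some g, n \in g & meval n c = dyield f c y t].
Proof.
elim/dtree_ind2: t => [|j ts IHts] y hw hd.
  exists [::], (var_poly S y), ([:: (1, y)], 1); split => //; first exact: mem_head.
  by rewrite /meval /= mulr1 mul1r.
move: hw; rewrite dwfE => /andP [hj hw].
have hs := wfl_size hw.
have hp := allP (Hf y) _ (mem_nth (mono0 S X) hj).
move: hd; rewrite dimE dim_childrenP => /andP [hall hcnt].
have hc := leq_trans (count_nonleaf hw) hcnt.
have hne : ts != [::] by apply/eqP => E; move: hp; rewrite hs E.
have [k [t' [r Ets]]] := split_one hne hc.
case Ek: (drop k (nth (mono0 S X) (f y) j).1) => [|[a z] rest].
  by have := size_drop k (nth (mono0 S X) (f y) j).1; rewrite Ek hs Ets size_cat /= size_nseq; lia.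
have hr : size rest = r.
  by have := size_drop k (nth (mono0 S X) (f y) j).1; rewrite Ek hs Ets size_cat /= !size_nseq; lia.
have [E1 E2] := spine_facts Ek.
have ht' : dwf f z t'.
  move: hw; rewrite E1 Ets wfl_cat; last by rewrite size_nseq.
  by case/andP => _ /andP [].
have hd' : (dtree_dim t' <= 1)%N.
  by move: hall; rewrite Ets dims_cat /= all_cat /= => /andP [_ /andP []].
have ht'in : t' \in ts by rewrite Ets mem_cat mem_head orbT.
have [cs' [g' [n' [h1 h2 h3]]]] := IHts t' ht'in z ht' hd'.
exists ((j, k) :: cs'),
  (take j (f y) ++ [seq mcat (mcat (take k (nth (mono0 S X) (f y) j).1, a) n0)
                     (rest, (nth (mono0 S X) (f y) j).2) | n0 <- g'] ++ drop j.+1 (f y)),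
  (mcat (mcat (take k (nth (mono0 S X) (f y) j).1, a) n') (rest, (nth (mono0 S X) (f y) j).2)).
split.
- by rewrite /= /occ_at (drop_nth (mono0 S X) hj) Ek h1.
- by rewrite !mem_cat; apply/orP; right; apply/orP; left; apply/mapP; exists n'.
- by rewrite Ets -hr; exact: (spine_yield Ek h3).
Qed.

Lemma base_case x : hatf f x c = treesum f 1 x c.
Proof.
apply: (nle_anti oc).
  apply: (csumT_lub idem oc) => cs; case E: (linsub f x cs) => [g|]; last exact: nle0.
  apply: (bigsum_lub idem) => n hn.
  have [t [h1 h2 h3]] := base_dir1 E hn.
  by rewrite h3; apply: term_le.
apply: (csumT_lub idem oc) => t; case: ifP => [/andP [h1 h2]|_]; last exact: nle0.
have [cs [g [n [E hn Hy]]]] := base_dir2 h1 h2.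
rewrite -Hy; apply: nle_trans (bigsum_ub (fun m => meval m c) hn) _.
rewrite /hatf.
have := csumT_ub oc (fun cs : seq (nat * nat) => if linsub f x cs is Some g then peval g c else 0) cs.
by rewrite E.
Qed.
End Base.

Local Close Scope ring_scope.

Theorem theorem6 (S : pzSemiRingType) (X : finType) (f : X -> spoly S X) :
  idempotent_sr S -> omega_continuous S ->
  (forall x, all (fun m : smono S X => (0 < size m.1)%N) (f x)) ->
  forall (n : nat) (x : X) (c : X -> S),
    Miter f n x c = treesum f (2 ^ n) x c.
Proof.
move=> idem oc Hf n; elim: n => [|n IH] x c.
  exact: (base_case idem oc c Hf x).
have -> : Miter f n.+1 x c = Miter f n x (fun y => Miter f n y c) by [].
rewrite IH expnS mul2n -addnn.
exact: (comp_treesum idem oc (K := 2 ^ n) (c := c) (c' := fun y => Miter f n y c) (fun y => IH y c) x).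
Qed.
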